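(* Let $G$ be a tree on node set $V$, $\lambda>0$, and let $T_1,\dots,T_\ell$ be independent complete traces of the cascade process with $p=1$ and rate $\lambda$ on $G$ (with arbitrary sources). If $\{u,v\}$ is an edge of $G$, then Algorithm 1 sets $c(u,v)<\lambda^{-1}$ with probability at least $1-c_1^{\ell}$, for some absolute constant $c_1<1$.
   Context: Cascade process with $p=1$ and rate $\lambda$ from a source $s$: every edge receives an independent length drawn from $\mathrm{Exp}(\lambda)$; the infection time $t(v)$ is the shortest-path distance from $s$. A complete trace records the infection time of every node; $t_i(v)$ denotes the infection time of $v$ in trace $T_i$. Algorithm 1 (tree reconstruction): for every pair of nodes $u,v$, let $c(u,v)$ be the median of $\{|t_i(u)-t_i(v)|\}_{i=1}^{\ell}$; if there exist a node $q$ and traces $T_i,T_j$ with $t_i(q)<t_i(u)<t_i(v)$ and $t_j(q)<t_j(v)<t_j(u)$, set $c(u,v)=\infty$. Output the minimum spanning tree of the complete graph on $V$ with respect to the costs $c(u,v)$. *)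

(* Defs.v *)
From HB Require Import structures.
From mathcomp Require Import all_boot all_order all_algebra.
From mathcomp Require Import all_classical all_reals all_analysis.
Set Implicit Arguments.
Unset Strict Implicit.
Unset Printing Implicit Defensive.
Import Order.TTheory GRing.Theory Num.Theory.

Local Open Scope ring_scope.

Definition simple_graph (V : finType) (e : rel V) : Prop :=
  symmetric e /\ irreflexive e.

Definition is_tree (V : finType) (e : rel V) : Prop :=
  [/\ simple_graph e,
      (forall x y : V, connect e x y) &
      (forall p : seq V, (3 <= size p)%N -> ~~ (cycle e p && uniq p))].

Definition is_edgeb (V : finType) (e : rel V) (A : {set V}) : bool :=
  [exists x, exists y, e x y && (A == [set x; y])].

Definition edge (V : finType) (e : rel V) := {A : {set V} | is_edgeb e A}.

(* Length of the pair (a,b) under an edge-length assignment L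
   (0 if {a,b} is not an edge; only used on edges). *)
Definition elen (R : realType) (V : finType) (e : rel V) (L : edge e -> R)
    (a b : V) : R :=
  match (insub [set a; b] : option (edge e)) with
  | Some E => L E
  | None => 0
  end.

Definition walk_len (R : realType) (V : finType) (e : rel V)
    (L : edge e -> R) (s : V) (p : seq V) : R :=
  \sum_(x <- pairmap (elen L) s p) x.

Definition spdist (R : realType) (V : finType) (e : rel V)
    (L : edge e -> R) (s v : V) : R :=
  inf [set w : R | exists p : seq V,
         [/\ path e s p, last s p = v & w = walk_len L s p]]%classic.

(* Median of a list: the element of index (size l)/2 of the sorted list
   (the middle element for odd size, the upper median for even size). *)
Definition median (R : realType) (l : seq R) : R :=
  nth 0 (sort <=%R l) ((size l) %/ 2)%N.

(* The cost c(u,v) set by Algorithm 1, given the infection times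
   t i x of node x in trace T_i (i < l). *)
Definition alg1_cost (R : realType) (V : finType) (l : nat)
    (t : 'I_l -> V -> R) (u v : V) : \bar R :=
  if [exists q : V, exists i : 'I_l, exists j : 'I_l,
        (t i q < t i u < t i v) && (t j q < t j v < t j u)]
  then +oo%E
  else (median [seq `|t i u - t i v| | i <- enum 'I_l])%:E.

Definition mutually_independent (R : realType) (d : measure_display)
    (T : measurableType d) (P : probability T R) (I : finType)
    (X : I -> {RV P >-> R}) : Prop :=
  forall B : I -> set R, (forall k, measurable (B k)) ->
    P [set w | forall k, B k (X k w)]%classic =
      (\prod_(k : I) P (X k @^-1` B k)%classic)%E.

(* Main.v *)
Require Import Defs.
From HB Require Import structures.
From mathcomp Require Import all_boot all_order all_algebra.
From mathcomp Require Import all_classical all_reals all_analysis.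
From mathcomp Require Import measurable_realfun.
From mathcomp Require Import ring lra zify.
Import Order.TTheory GRing.Theory Num.Theory.

Module PartA.
Set Implicit Arguments. Unset Strict Implicit. Unset Printing Implicit Defensive.
Local Open Scope ring_scope.

Section Graph.
Variables (V : finType) (e : rel V).
Hypothesis esym : symmetric e.
Hypothesis eirr : irreflexive e.
Hypothesis eacyc : forall p : seq V, (3 <= size p)%N -> ~~ (cycle e p && uniq p).
Variables u v : V.
Hypothesis euv : e u v.

Definition e' : rel V := fun a b => e a b && ([set a; b] != [set u; v]).
Definition Cv (a : V) : bool := connect e' a v.

Lemma set2_eqP (a b : V) : [set a; b] = [set u; v] ->
  (a = u /\ b = v) \/ (a = v /\ b = u).
Proof.
move=> H.
have ha : a \in [set u; v] by rewrite -H !inE eqxx.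
have hb : b \in [set u; v] by rewrite -H !inE eqxx orbT.
have hu : u \in [set a; b] by rewrite H !inE eqxx.
have hv : v \in [set a; b] by rewrite H !inE eqxx orbT.
move: ha hb hu hv; rewrite !inE.
case/orP=> /eqP h1; case/orP=> /eqP h2; case/orP=> /eqP h3; case/orP=> /eqP h4;
 first [left; split; congruence | right; split; congruence].
Qed.

Lemma e'_sym : symmetric e'.
Proof. by move=> a b; rewrite /e' esym finset.setUC. Qed.

Lemma not_Cu : ~~ Cv u.
Proof.
apply/negP => /connectP [p pp lp].
move: lp; case: (shortenP pp) => p' pp' up' _ lp.
have hs : (3 <= size (u :: p'))%N.
  case: p' pp' up' lp => [|y [|z q]] //=.
  - by move=> _ _ vu; move: euv; rewrite vu eirr.
  - by rewrite /e' => /andP[/andP[_ hne] _] _ vy; move: hne; rewrite -vy eqxx.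
move/negP: (eacyc hs); apply; apply/andP; split=> //.
rewrite /= rcons_path -lp esym euv andbT.
by apply: sub_path pp' => a b /andP[].
Qed.

Lemma sub_cons2 (s y : V) p : {subset y :: p <= s :: y :: p}.
Proof. by move=> z zi; rewrite in_cons zi orbT. Qed.

Lemma cross1 s p : path e s p -> Cv s -> ~~ Cv (last s p) ->
  (u \in s :: p) && (v \in s :: p).
Proof.
elim: p s => [|y p IH] s /=.
  by move=> _ ->.
move=> /andP[esy py] Cs.
case Cy: (Cv y).
  move=> nC; have /andP[h1 h2] := IH y py Cy nC.
  by rewrite (sub_cons2 s h1) (sub_cons2 s h2).
move=> _.
case: (boolP ([set s; y] == [set u; v])) => [/eqP/set2_eqP [[hs hy]|[hs hy]] | hne].
- by subst; rewrite /Cv connect0 in Cy.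
- by subst; rewrite !inE !eqxx !orbT.
- have ys : e' y s by rewrite e'_sym /e' esy hne.
  have : Cv y by rewrite /Cv (connect_trans (connect1 ys) Cs).
  by rewrite Cy.
Qed.

Lemma cross2 s p : path e s p -> ~~ Cv s -> Cv (last s p) ->
  (u \in s :: p) && (v \in s :: p).
Proof.
elim: p s => [|y p IH] s /=.
  by move=> _ /negPf ->.
move=> /andP[esy py] Cs.
case Cy: (Cv y); last first.
  move=> nC; have /andP[h1 h2] := IH y py (negbT Cy) nC.
  by rewrite (sub_cons2 s h1) (sub_cons2 s h2).
move=> _.
case: (boolP ([set s; y] == [set u; v])) => [/eqP/set2_eqP [[hs hy]|[hs hy]] | hne].
- by subst; rewrite !inE !eqxx !orbT.
- by subst; rewrite /Cv connect0 in Cs.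
- have sy : e' s y by rewrite /e' esy hne.
  have : Cv s by rewrite /Cv (connect_trans (connect1 sy) Cy).
  by rewrite (negPf Cs).
Qed.

End Graph.

Section Walks.
Variables (R : realType) (V : finType) (e : rel V) (L : edge e -> R).
Hypothesis hL : forall E, 0 <= L E.

Lemma walk_len_nil s : walk_len L s [::] = 0.
Proof. by rewrite /walk_len big_nil. Qed.

Lemma walk_len_cons s y p : walk_len L s (y :: p) = elen L s y + walk_len L y p.
Proof. by rewrite /walk_len /= big_cons. Qed.

Lemma walk_len_cat s p1 p2 :
  walk_len L s (p1 ++ p2) = walk_len L s p1 + walk_len L (last s p1) p2.
Proof. by rewrite /walk_len pairmap_cat big_cat. Qed.

Lemma elen_ge0 a b : 0 <= elen L a b.
Proof. by rewrite /elen; case: insub. Qed.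

Lemma walk_len_ge0 s p : 0 <= walk_len L s p.
Proof.
elim: p s => [|y p IH] s; first by rewrite walk_len_nil.
by rewrite walk_len_cons addr_ge0 ?elen_ge0.
Qed.

Definition Wset s x := [set w : R | exists p : seq V,
         [/\ path e s p, last s p = x & w = walk_len L s p]]%classic.

Lemma spdistE s x : spdist L s x = inf (Wset s x).
Proof. by []. Qed.

Lemma W_lb s x : has_lbound (Wset s x).
Proof. by exists 0 => w [p [_ _ ->]]; exact: walk_len_ge0. Qed.

Lemma W_ne s x : connect e s x -> (Wset s x !=set0)%classic.
Proof.
case/connectP => p pp lp; exists (walk_len L s p); exists p; split => //.
Qed.

Lemma spdist_le_walk s p : path e s p -> spdist L s (last s p) <= walk_len L s p.
Proof. by move=> pp; apply: (ge_inf (W_lb s _)); exists p; split. Qed.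

Lemma spdist_ge0 s x : connect e s x -> 0 <= spdist L s x.
Proof.
move=> cx; apply: lb_le_inf (W_ne cx) _ => w [p [_ _ ->]]; exact: walk_len_ge0.
Qed.

Lemma spdist_mono s x y : connect e s x ->
  (forall p, path e s p -> last s p = x -> y \in s :: p) ->
  spdist L s y <= spdist L s x.
Proof.
move=> cx hy; apply: lb_le_inf (W_ne cx) _ => w [p [pp lp ->]].
have h := hy p pp lp; move: pp; case/splitPl: h => p1 p2 lp1.
rewrite cat_path => /andP[pp1 _]; rewrite walk_len_cat.
rewrite -lp1; apply: le_trans (spdist_le_walk pp1) _.
by rewrite lerDl walk_len_ge0.
Qed.

Lemma spdist_edge s u v : connect e s u -> e u v ->
  spdist L s v <= spdist L s u + elen L u v.
Proof.
move=> cu euv; rewrite -lerBlDr; apply: lb_le_inf (W_ne cu) _ => w [p [pp lp ->]].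
rewrite lerBlDr.
have pr : path e s (rcons p v) by rewrite rcons_path pp lp euv.
have := spdist_le_walk pr; rewrite last_rcons -cats1 walk_len_cat lp.
by rewrite walk_len_cons walk_len_nil addr0.
Qed.

End Walks.

End PartA.
Import PartA.

Module PartB.
Set Implicit Arguments. Unset Strict Implicit. Unset Printing Implicit Defensive.
Local Open Scope ring_scope.
Section Flag.
Variables (R : realType) (V : finType) (e : rel V).
Hypothesis esym : symmetric e.
Hypothesis eirr : irreflexive e.
Hypothesis eacyc : forall p : seq V, (3 <= size p)%N -> ~~ (cycle e p && uniq p).
Hypothesis econn : forall x y : V, connect e x y.
Variables u v : V.
Hypothesis euv : e u v.

Let nCu := not_Cu esym eirr eacyc euv.
Let Cvv : Cv e u v v := connect0 _ _.

Lemma K1 (L : edge e -> R) (hL : forall E, 0 <= L E) s x :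
  Cv e u v s -> ~~ Cv e u v x ->
  spdist L s v <= spdist L s u /\ spdist L s u <= spdist L s x.
Proof.
move=> Cs nCx; split.
- apply: spdist_mono => // p pp lp.
  by have := cross1 esym pp Cs; rewrite lp => /(_ nCu) /andP[].
- apply: spdist_mono => // p pp lp.
  by have := cross1 esym pp Cs; rewrite lp => /(_ nCx) /andP[].
Qed.

Lemma K2 (L : edge e -> R) (hL : forall E, 0 <= L E) s x :
  ~~ Cv e u v s -> Cv e u v x ->
  spdist L s u <= spdist L s v /\ spdist L s v <= spdist L s x.
Proof.
move=> Cs Cx; split.
- apply: spdist_mono => // p pp lp.
  by have := cross2 pp Cs; rewrite lp => /(_ Cvv) /andP[].
- apply: spdist_mono => // p pp lp.
  by have := cross2 pp Cs; rewrite lp => /(_ Cx) /andP[].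
Qed.

Lemma noflag (Li Lj : edge e -> R) (hLi : forall E, 0 <= Li E)
  (hLj : forall E, 0 <= Lj E) si sj q :
  ~~ ((spdist Li si q < spdist Li si u < spdist Li si v) &&
      (spdist Lj sj q < spdist Lj sj v < spdist Lj sj u)).
Proof.
apply/negP => /andP[/andP[i1 i2] /andP[j1 j2]].
have nCsi : ~~ Cv e u v si.
  apply/negP => Csi; have [h _] := K1 hLi Csi nCu.
  by move: (lt_le_trans i2 h); rewrite ltxx.
have nCq : ~~ Cv e u v q.
  apply/negP => Cq; have [_ h] := K2 hLi nCsi Cq.
  by move: (lt_trans (le_lt_trans h i1) i2); rewrite ltxx.
have Csj : Cv e u v sj.
  case: (boolP (Cv e u v sj)) => // nCsj; have [h _] := K2 hLj nCsj Cvv.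
  by move: (lt_le_trans j2 h); rewrite ltxx.
have [_ h] := K1 hLj Csj nCq.
by move: (lt_trans (le_lt_trans h j1) j2); rewrite ltxx.
Qed.

End Flag.

Lemma count_enumE (T : finType) (P : pred T) : count P (enum T) = #|P|.
Proof. by rewrite cardE -deprecated_filter_index_enum size_filter enumT. Qed.

Lemma median_lt (R : realType) (a : seq R) c :
  (size a %/ 2 < count (fun x => (x < c)%R) a)%N -> median a < c.
Proof.
move=> h; rewrite /median; apply: nth_count_lt.
  exact: sort_le_sorted.
by rewrite count_sort.
Qed.

Lemma median_ge (R : realType) (a : seq R) c : (0 < size a)%N ->
  (count (fun x => (x < c)%R) a <= size a %/ 2)%N -> c <= median a.
Proof.
move=> h0 h; rewrite /median; apply: nth_count_ge.
  exact: sort_le_sorted.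
by rewrite count_sort size_sort h /= ltn_Pdiv.
Qed.

Lemma median_ltE (R : realType) (a : seq R) c : (0 < size a)%N ->
  (median a < c) = (size a %/ 2 < count (fun x => (x < c)%R) a)%N.
Proof.
move=> h0; apply/idP/idP; last exact: median_lt.
by apply: contraTT; rewrite -leqNgt -leNgt; exact: median_ge.
Qed.

End PartB.
Import PartB.

Module PartC.
Set Implicit Arguments. Unset Strict Implicit. Unset Printing Implicit Defensive.
Local Open Scope classical_set_scope.
Local Open Scope ring_scope.

Section Meas.
Variables (R : realType) (d : measure_display) (Omega : measurableType d).

Lemma mset_lt (f : Omega -> R) c : measurable_fun setT f ->
  measurable [set w | f w < c].
Proof.
move=> mf; rewrite -[X in measurable X]setTI.
have -> : [set w | f w < c] = f @^-1` `]-oo, c[ .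
  by apply/seteqP; split => w /=; rewrite in_itv.
by apply: mf => //; exact: measurable_itv.
Qed.

Lemma mset_le (f : Omega -> R) c : measurable_fun setT f ->
  measurable [set w | c <= f w].
Proof.
move=> mf; rewrite -[X in measurable X]setTI.
have -> : [set w | c <= f w] = f @^-1` `[c, +oo[ .
  by apply/seteqP; split => w /=; rewrite in_itv /= andbT.
by apply: mf => //; exact: measurable_itv.
Qed.

Lemma mbigcap (I : countType) (W : set I) (F : I -> set Omega) :
  (forall i, measurable (F i)) -> measurable (\bigcap_(i in W) F i).
Proof.
move=> mF; rewrite -[X in measurable X]setCK setC_bigcap; apply: measurableC.
rewrite bigcup_mkcond; apply: countable_bigcupT_measurable.
  exact: countableP.
by move=> i; case: ifP => // _; apply: measurableC.
Qed.

Lemma mbigcup (I : countType) (W : set I) (F : I -> set Omega) :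
  (forall i, measurable (F i)) -> measurable (\bigcup_(i in W) F i).
Proof.
move=> mF; rewrite bigcup_mkcond; apply: countable_bigcupT_measurable.
  exact: countableP.
by move=> i; case: ifP.
Qed.

Lemma measurable_inf (I : countType) (W : set I) (f : I -> Omega -> R) :
  W !=set0 -> (forall i, measurable_fun setT (f i)) ->
  measurable_fun setT (fun w => inf [set f i w | i in W]).
Proof.
move=> W0 mf; apply: (measurability _ (measurable_realfun.RGenInftyO.measurableE R)) => //.
move=> _ [_ [c ->] <-].
set Bdd := \bigcup_(n in [set: nat]) \bigcap_(i in W) [set w | - n%:R <= f i w].
have mBdd : measurable Bdd.
  by apply: mbigcup => n; apply: mbigcap => i; exact: mset_le.
have mA : measurable (\bigcup_(i in W) [set w | f i w < c]).
  by apply: mbigcup => i; exact: mset_lt.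
have -> : setT `&` (fun w => inf [set f i w | i in W]) @^-1` `]-oo, c[ =
   (Bdd `&` \bigcup_(i in W) [set w | f i w < c]) `|` (~` Bdd `&` [set _ | 0 < c]).
  apply/seteqP; split => w /=.
  - rewrite in_itv /= => -[_ hw].
    have Fne : [set f i w | i in W] !=set0.
      by case: W0 => i Wi; exists (f i w); exists i.
    case: (pselect (has_lbound [set f i w | i in W])) => hb.
    + left; split.
        case: hb => M hM; exists (Num.truncn (- M)).+1 => //.
        move=> i Wi /=; have := hM _ (ex_intro2 _ _ i Wi erefl) => /= hMi.
        apply: le_trans hMi; rewrite lerNl; apply: ltW; exact: truncnS_gt.
      have [y [i Wi <-] yc] := inf_lt Fne hw.
      by exists i.
    + right; split; last by rewrite -(inf_out (fun h => hb h.2)).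
      move=> [n _ hn]; apply: hb; exists (- n%:R) => y [i Wi <-].
      exact: hn.
  - rewrite in_itv /= => -[[hB [i Wi hi]]|[nB c0]]; split => //.
    + apply: le_lt_trans hi; apply: (ge_inf _ (ex_intro2 _ _ i Wi erefl)).
      case: hB => n _ hn; exists (- n%:R) => y [j Wj <-]; exact: hn.
    + rewrite inf_out // => -[_ [M hM]]; apply: nB.
      exists (Num.truncn (- M)).+1 => //.
      move=> i Wi /=; have := hM _ (ex_intro2 _ _ i Wi erefl) => /= hMi.
      apply: le_trans hMi; rewrite lerNl; apply: ltW; exact: truncnS_gt.
apply: measurableU; apply: measurableI => //; first exact: measurableC.
by case: (pselect (0 < c)) => hc; [rewrite (_ : [set _ | _] = setT) | rewrite (_ : [set _ | _] = set0)];
  rewrite //; apply/seteqP; split => x //=.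
Qed.

End Meas.

End PartC.
Import PartC.

Module PartD.
Set Implicit Arguments. Unset Strict Implicit. Unset Printing Implicit Defensive.
Local Open Scope classical_set_scope.
Local Open Scope ring_scope.

Lemma card_gtE (T : finType) (P : pred T) k :
  (k < #|P|)%N = [exists S : {set T}, (k < #|S|)%N && [forall i in S, P i]].
Proof.
apply/idP/existsP => [h|[S /andP[hS /forallP hP]]].
  exists [set i | P i]%SET; rewrite cardsE h /=; apply/forallP => i.
  by apply/implyP; rewrite inE.
apply: (leq_trans hS); apply: subset_leq_card; apply/fintype.subsetP => i iS.
by have := hP i; rewrite iS.
Qed.

Section Meas2.
Variables (R : realType) (d : measure_display) (Omega : measurableType d).

Lemma mfun_exists (T : finType) (P : T -> Omega -> bool) :
  (forall x, measurable_fun setT (P x)) ->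
  measurable_fun setT (fun w => [exists x, P x w]).
Proof.
move=> mP; apply: (measurable_fun_bool true) => //.
have -> : setT `&` (fun w => [exists x, P x w]) @^-1` [set true] =
    \bigcup_(x in [set: T]) (setT `&` P x @^-1` [set true]).
  apply/seteqP; split => w /=.
    by case=> _ /existsP [x hx]; exists x => //.
  by case=> x _ [_ hx]; split => //; apply/existsP; exists x.
apply: fin_bigcup_measurable; first exact: finite_finset.
by move=> x _; apply: mP.
Qed.

Lemma mfun_forall (T : finType) (P : T -> Omega -> bool) :
  (forall x, measurable_fun setT (P x)) ->
  measurable_fun setT (fun w => [forall x, P x w]).
Proof.
move=> mP.
have -> : (fun w => [forall x, P x w]) = (fun w => ~~ [exists x, ~~ P x w]).
  by apply/funext => w; rewrite negb_exists; apply: eq_forallb => x; rewrite negbK.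
apply: measurable_neg; apply: mfun_exists => x; exact: measurable_neg.
Qed.

Section W.
Variables (V : finType) (e : rel V) (L : Omega -> edge e -> R).
Hypothesis mL : forall E, measurable_fun setT (fun w => L w E).

Lemma m_elen a b : measurable_fun setT (fun w => elen (L w) a b).
Proof. by rewrite /elen; case: insub => [E|] //; exact: measurable_cst. Qed.

Lemma m_walk s p : measurable_fun setT (fun w => walk_len (L w) s p).
Proof.
elim: p s => [|y p IH] s.
  have -> : (fun w => walk_len (L w) s [::]) = cst 0.
    by apply/funext => w; rewrite walk_len_nil.
  exact: measurable_cst.
have -> : (fun w => walk_len (L w) s (y :: p)) =
    (fun w => elen (L w) s y) \+ (fun w => walk_len (L w) y p).
  by apply/funext => w; rewrite walk_len_cons.
apply: measurable_funD => //; exact: m_elen.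
Qed.

Lemma m_spdist s x : connect e s x ->
  measurable_fun setT (fun w => spdist (L w) s x).
Proof.
move=> cx.
have -> : (fun w => spdist (L w) s x) = (fun w => inf
     [set walk_len (L w) s p | p in [set p | path e s p /\ last s p = x]]).
  apply/funext => w; rewrite /spdist; congr inf; apply/seteqP; split => y /=.
  - by case=> p [pp lp ->]; exists p.
  - by case=> p [pp lp] <-; exists p.
apply: measurable_inf.
  by case/connectP: cx => p pp lp; exists p; split.
move=> p; exact: m_walk.
Qed.
End W.

Lemma m_good (V : finType) (l : nat) (t : 'I_l -> V -> Omega -> R) (u v : V) c :
  (0 < l)%N -> (forall i x, measurable_fun setT (t i x)) ->
  measurable_fun setT (fun w => (alg1_cost (fun i x => t i x w) u v < c%:E)%E).
Proof.
move=> l0 mt.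
have -> : (fun w => (alg1_cost (fun i x => t i x w) u v < c%:E)%E) =
  (fun w => ~~ [exists q, [exists i, [exists j,
        (t i q w < t i u w < t i v w) && (t j q w < t j v w < t j u w)]]] &&
     [exists S : {set 'I_l}, (l %/ 2 < #|S|)%N &&
         [forall i in S, `|t i u w - t i v w| < c]]).
  apply/funext => w; rewrite /alg1_cost.
  case: ifP => _ /=; first by rewrite ltNge leey.
  rewrite lte_fin median_ltE; last by rewrite size_map size_enum_ord.
  by rewrite size_map size_enum_ord count_map count_enumE card_gtE.
apply: measurable_and.
  apply: measurable_neg.
  apply: (@mfun_exists _ (fun q w => [exists i, [exists j,
        (t i q w < t i u w < t i v w) && (t j q w < t j v w < t j u w)]])) => q.
  apply: (@mfun_exists _ (fun i w => [exists j,
        (t i q w < t i u w < t i v w) && (t j q w < t j v w < t j u w)])) => i.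
  apply: (@mfun_exists _ (fun j w =>
        (t i q w < t i u w < t i v w) && (t j q w < t j v w < t j u w))) => j.
  by apply: measurable_and; apply: measurable_and; apply: measurable_fun_ltr.
apply: (@mfun_exists _ (fun (S : {set 'I_l}) w => (l %/ 2 < #|S|)%N &&
         [forall i in S, `|t i u w - t i v w| < c])) => S.
apply: measurable_and; first exact: measurable_cst.
apply: (@mfun_forall _ (fun i w => (i \in S) ==> (`|t i u w - t i v w| < c))) => i.
rewrite (_ : (fun w => _) = (fun w => ~~ (i \in S) || (`|t i u w - t i v w| < c))); last first.
  by apply/funext => w; rewrite implybE.
apply: measurable_or; first exact: measurable_cst.
apply: measurable_fun_ltr.
  apply: measurableT_comp => //; exact: measurable_funB.
exact: measurable_cst.
Qed.

End Meas2.

End PartD.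
Import PartD.

Module PartE.
Set Implicit Arguments. Unset Strict Implicit. Unset Printing Implicit Defensive.
Local Open Scope classical_set_scope.
Local Open Scope ring_scope.
Section Prob.
Variables (R : realType) (d : measure_display) (Omega : measurableType d)
  (P : probability Omega R) (V : finType) (e : rel V) (l : nat).
Variable X : 'I_l * edge e -> {RV P >-> R}.
Variable lam : R.
Hypothesis lam0 : 0 < lam.
Hypothesis hdist : forall k (A : set R), measurable A ->
       distribution P (X k) A = exponential_prob lam A.

Definition xth := (9%:R / 10%:R) / lam.
Definition p0 := expR (- (9%:R / 10%:R) : R).

Lemma xth_gt0 : 0 < xth.
Proof. by rewrite /xth divr_gt0. Qed.

Lemma xth_lt : xth < lam^-1.
Proof.
rewrite /xth -[X in _ < X]mul1r ltr_pM2r ?invr_gt0 //.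
by rewrite ltr_pdivrMr // mul1r ltr_nat.
Qed.

Lemma PX k A : measurable A -> P (X k @^-1` A) = exponential_prob lam A.
Proof. by move=> mA; rewrite -(hdist k mA). Qed.

Lemma P_nonneg k : P (X k @^-1` `[0, +oo[) = 1%E.
Proof.
have hsplit : (X k @^-1` `]-oo, 0[) `|` (X k @^-1` `[0, +oo[) = setT.
  apply/seteqP; split => w //= _; rewrite !in_itv /= andbT.
  by case: (ltP (X k w) 0) => h; [left|right].
have h0 : P (X k @^-1` `]-oo, 0[) = 0%E.
  rewrite PX //; rewrite /exponential_prob integral0_eq // => y.
  by rewrite /= in_itv /= => y0; rewrite lt0_exponential_pdf.
have := probability_setT P; rewrite -hsplit measureU //=.
- by rewrite h0 add0e.
- exact: measurable_funPTI.
- exact: measurable_funPTI.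
- apply/seteqP; split => w //= []; rewrite !in_itv /= andbT => h1 h2.
  by move: (lt_le_trans h1 h2); rewrite ltxx.
Qed.

Lemma P_le k : P (X k @^-1` `[0, xth]) = (1 - p0)%:E.
Proof.
rewrite PX // exponential_prob_itv0c ?xth_gt0 // EFinB.
have -> : - lam * xth = - (9%:R / 10%:R) by rewrite /xth mulNr mulrCA divff ?gt_eqF // mulr1.
by [].
Qed.

Lemma P_gt k : P (X k @^-1` `]xth, +oo[) = p0%:E.
Proof.
have hsplit : (X k @^-1` `[0, xth]) `|` (X k @^-1` `]xth, +oo[) =
    X k @^-1` `[0, +oo[.
  apply/seteqP; split => w /=; rewrite !in_itv /= ?andbT.
  - case=> [/andP[]|] h //; exact: (le_trans (ltW xth_gt0) (ltW h)).
  - by move=> h; case: (leP (X k w) xth) => h2; [left; rewrite h|right].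
have := P_nonneg k; rewrite -hsplit measureU //=; first last.
- apply/seteqP; split => w //= []; rewrite !in_itv /= ?andbT => /andP[_ h1] h2.
  by move: (le_lt_trans h1 h2); rewrite ltxx.
- exact: measurable_funPTI.
- exact: measurable_funPTI.
rewrite P_le.
move: (measure_ge0 P (X k @^-1` `]xth, +oo[)).
case: (P (X k @^-1` `]xth, +oo[)) => [r| |] //= _ h.
have h2 : (1 - p0 + r)%:E = 1%:E by rewrite EFinD h.
have h3 := EFin_inj h2; congr EFin; lra.
Qed.

Hypothesis indep : mutually_independent X.
Variable Euv : edge e.

Definition Bset (S : {set 'I_l}) (k : 'I_l * edge e) : set R :=
  if k.2 == Euv then (if k.1 \in S then [set` `]xth, +oo[%R] else [set` `[0, xth]%R])
  else [set` `[0, +oo[%R].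

Definition Ev S := [set w | forall k, Bset S k (X k w)].

Lemma Bset_meas S k : measurable (Bset S k).
Proof. rewrite /Bset; case: ifP => _; [case: ifP => _|]; exact: measurable_itv. Qed.

Lemma Ev_meas S : measurable (Ev S).
Proof.
have -> : Ev S = \bigcap_(k in [set: 'I_l * edge e]) (X k @^-1` Bset S k).
  by apply/seteqP; split => w /= h k; [move=> _|]; apply: h.
apply: fin_bigcap_measurable; first exact: finite_finset.
by move=> k _; apply: measurable_funPTI; exact: Bset_meas.
Qed.

Definition fS (S : {set 'I_l}) (k : 'I_l * edge e) : R :=
  if k.2 == Euv then (if k.1 \in S then p0 else 1 - p0) else 1.

Lemma P_Ev S : P (Ev S) = (\prod_k fS S k)%:E.
Proof.
rewrite /Ev (indep (Bset_meas S)).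
rewrite -prodEFin; apply: eq_bigr => k _.
rewrite /Bset /fS; case: ifP => _; [case: ifP => _|].
- exact: P_gt.
- exact: P_le.
- exact: P_nonneg.
Qed.

Lemma prod_fS S : \prod_k fS S k =
   p0 ^+ #|S| * (1 - p0) ^+ #|[pred i | i \notin S]|.
Proof.
transitivity (\prod_i \prod_(E : edge e) fS S (i, E)).
  by rewrite pair_bigA; apply: eq_bigr => -[i E].
have inner i : \prod_(E : edge e) fS S (i, E) = (if i \in S then p0 else 1 - p0).
  by rewrite /fS /= -big_mkcond big_pred1_eq.
under eq_bigr do rewrite inner.
rewrite (bigID (mem S)) /=.
rewrite (eq_bigr (fun=> p0)); last by move=> i ->.
rewrite [X in _ * X](eq_bigr (fun=> 1 - p0)); last by move=> i /negbTE ->.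
by rewrite !prodr_const.
Qed.

Lemma Ev_char S w : Ev S w -> S = [set i | xth < X (i, Euv) w]%SET.
Proof.
move=> h; apply/setP => i; rewrite inE; have := h (i, Euv).
rewrite /Bset /= eqxx; case: (i \in S); rewrite /= in_itv /= ?andbT.
- by move->.
- by case/andP => _ h'; apply/esym/negbTE; rewrite -leNgt.
Qed.

Lemma Ev_ge0 S w k : Ev S w -> 0 <= X k w.
Proof.
move=> h; have := h k; rewrite /Bset; case: ifP => _; [case: ifP => _|];
  rewrite /= in_itv /= ?andbT //.
- by move=> h'; apply: le_trans (ltW h'); exact: ltW xth_gt0.
- by case/andP.
Qed.

Lemma Ev_le S w i : Ev S w -> i \notin S -> X (i, Euv) w <= xth.
Proof.
move=> h iS; have := h (i, Euv); rewrite /Bset /= eqxx (negbTE iS) /= in_itv /=.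
by case/andP.
Qed.

Lemma sum_union (T : finType) (F : T -> set Omega) :
  (forall t, measurable (F t)) -> trivIset setT F ->
  P (\bigcup_(t in setT) F t) = (\sum_(t : T) P (F t))%E.
Proof.
move=> mF tF; rewrite measure_fin_bigcup;
  [|exact: finite_finset|exact: tF|by move=> t _; exact: mF].
rewrite (fsbigE (enum T)) ?enum_uniq //; last by move=> i _; rewrite mem_enum.
transitivity (\sum_(i <- enum T) P (F i))%E.
  by apply: eq_bigl => t; rewrite in_setT.
by rewrite big_enum; apply: eq_bigl => t.
Qed.

End Prob.

End PartE.
Import PartE.

Module PartF.
Set Implicit Arguments. Unset Strict Implicit. Unset Printing Implicit Defensive.
Local Open Scope classical_set_scope.
Local Open Scope ring_scope.

Lemma chern (R : realFieldType) (p : R) (a b : nat) :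
  0 <= p -> p <= 1000%:R / 2197%:R -> (b <= a)%N ->
  p ^+ a * (1 - p) ^+ b <= (999%:R / 2000%:R) ^+ (a + b).
Proof.
move=> p0 p1 hab.
have hp : p <= 999%:R / 2000%:R by lra.
have hq0 : 0 <= p * (1 - p) by apply: mulr_ge0 => //; lra.
have hq : p * (1 - p) <= (999%:R / 2000%:R) ^+ 2 by rewrite expr2; nra.
have -> : p ^+ a * (1 - p) ^+ b = p ^+ (a - b) * (p * (1 - p)) ^+ b.
  by rewrite exprMn mulrA -exprD subnK.
have -> : (999%:R / 2000%:R : R) ^+ (a + b) =
    (999%:R / 2000%:R) ^+ (a - b) * ((999%:R / 2000%:R) ^+ 2) ^+ b.
  by rewrite -exprM -exprD; congr (_ ^+ _); lia.
have hm0 : (0 : R) <= 999%:R / 2000%:R by lra.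
apply: ler_pM.
- exact: exprn_ge0.
- exact: exprn_ge0.
- apply: (lerXn2r (a - b)); [rewrite nnegrE; exact: p0 | rewrite nnegrE; exact: hm0 | exact: hp].
- apply: (lerXn2r b); [rewrite nnegrE; exact: hq0 | rewrite nnegrE; exact: exprn_ge0 | exact: hq].
Qed.

Lemma p0_bound (R : realType) : 0 <= p0 R <= 1000%:R / 2197%:R.
Proof.
apply/andP; split; first exact/ltW/expR_gt0.
rewrite /p0 expRN.
have he : 2197%:R / 1000%:R <= expR (9%:R / 10%:R : R).
  have -> : (9%:R / 10%:R : R) = (3%:R / 10%:R) * 3%:R by lra.
  rewrite expRM_natr.
  have h13 : 13%:R / 10%:R <= expR (3%:R / 10%:R : R).
    by have := expR_ge1Dx (3%:R/10%:R : R); lra.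
  have h3 : (13%:R/10%:R : R) ^+ 3 <= expR (3%:R / 10%:R : R) ^+ 3.
    apply: (lerXn2r 3); [rewrite nnegrE; lra | rewrite nnegrE; exact/ltW/expR_gt0 | exact: h13].
  by move: h3; rewrite !exprS expr0; lra.
apply: (@le_trans _ _ ((2197%:R / 1000%:R)^-1)).
  rewrite lef_pV2; [exact: he | rewrite posrE; exact: expR_gt0 | rewrite posrE; lra].
rewrite invf_div; exact: lexx.
Qed.

Lemma elenE (R : realType) (V : finType) (e : rel V) (L : edge e -> R) a b
  (E : edge e) : val E = [set a; b]%SET -> elen L a b = L E.
Proof.
move=> hE; rewrite /elen; case: insubP => [E' _ hE'|].
- by congr L; apply: val_inj; rewrite hE' hE.
- by rewrite -hE (valP E).
Qed.

End PartF.
Import PartF.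

Unset Implicit Arguments.
Set Strict Implicit.
Set Printing Implicit Defensive.
Local Open Scope classical_set_scope.
Local Open Scope ring_scope.

Theorem lemma4 (R : realType) :
  exists c1 : R, 0 <= c1 < 1 /\
  forall (V : finType) (e : rel V), is_tree e ->
  forall (lam : R), 0 < lam ->
  forall (l : nat) (s : 'I_l -> V)
         (d : measure_display) (Omega : measurableType d)
         (P : probability Omega R)
         (X : 'I_l * edge e -> {RV P >-> R}),
    mutually_independent X ->
    (forall k (A : set R), measurable A ->
       distribution P (X k) A = exponential_prob lam A) ->
    forall u v : V, e u v ->
      ((1 - c1 ^+ l)%:E <=
       P [set w | (alg1_cost
                     (fun (i : 'I_l) (x : V) =>
                        spdist (fun E : edge e => X (i, E) w) (s i) x) u v
                   < (lam^-1)%:E)%E])%E.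
Proof.
exists (999%:R / 1000%:R); split; first by apply/andP; split; lra.
move=> V e [[esym eirr] econn eacyc] lam lam0 l s d Omega P X indep hdist u v euv.
case: (posnP l) => [l0|lpos].
  have -> : (999%:R / 1000%:R : R) ^+ l = 1 by rewrite l0 expr0.
  rewrite subrr; exact: measure_ge0.
have huv : is_edgeb e [set u; v]%SET.
  by apply/existsP; exists u; apply/existsP; exists v; rewrite euv eqxx.
pose Euv : edge e := exist _ [set u; v]%SET huv.
have elen_uv (L : edge e -> R) : elen L u v = L Euv by apply: elenE.
have elen_vu (L : edge e -> R) : elen L v u = L Euv.
  by apply: elenE; rewrite /= finset.setUC.
pose small (S : {set 'I_l}) := (2 * #|S| < l)%N.
pose Fs (S : {set 'I_l}) := if small S then Ev X lam Euv S else set0.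
have mEv := Ev_meas X lam Euv.
have mFs S : measurable (Fs S).
  rewrite /Fs; case: ifP => _; [exact: mEv | exact: measurable0].
have triv : trivIset setT (Ev X lam Euv).
  by move=> S1 S2 _ _ [w [h1 h2]]; rewrite (Ev_char h1) (Ev_char h2).
have trivF : trivIset setT Fs.
  move=> S1 S2 _ _ [w []]; rewrite /Fs; case: ifP => _; case: ifP => _ //.
  by move=> h1 h2; rewrite (Ev_char h1) (Ev_char h2).
have inG S w : small S -> Ev X lam Euv S w ->
   (alg1_cost (fun i x => spdist (fun E => X (i, E) w) (s i) x) u v
     < (lam^-1)%:E)%E.
  move=> hS hw.
  have hL i : forall E, 0 <= X (i, E) w := fun E => Ev_ge0 lam0 (i, E) hw.
  rewrite /alg1_cost ifF; last first.
    apply/negbTE; apply/existsPn => q; apply/existsPn => i; apply/existsPn => j.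
    exact: (noflag esym eirr eacyc econn euv (hL i) (hL j)).
  rewrite lte_fin; apply: median_lt.
  rewrite size_map size_enum_ord count_map count_enumE.
  have hC : (#|S| + #|[pred i | i \notin S]|)%N = l.
    by rewrite -[X in _ = X]card_ord -(cardC S); congr (_ + _)%N; apply: eq_card.
  apply: (@leq_trans #|[pred i | i \notin S]|).
    rewrite /small in hS; lia.
  apply: subset_leq_card; apply/fintype.subsetP => i; rewrite !inE => iS.
  apply: le_lt_trans (xth_lt lam0); apply: le_trans (Ev_le hw iS).
  have h1 := spdist_edge (hL i) (econn (s i) u) euv.
  have evu : e v u by rewrite esym.
  have h2 := spdist_edge (hL i) (econn (s i) v) evu.
  rewrite elen_uv in h1; rewrite elen_vu in h2.
  rewrite ler_norml; apply/andP; split; lra.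
have mG : measurable [set w | (alg1_cost
         (fun i x => spdist (fun E => X (i, E) w) (s i) x) u v < (lam^-1)%:E)%E].
  have mt i x : measurable_fun setT
      (fun w => spdist (fun E => X (i, E) w) (s i) x).
    apply: (@m_spdist _ _ _ _ _ (fun w E => X (i, E) w)); last exact: econn.
    move=> E; exact: measurable_funP.
  have mb : measurable [set true] by [].
  have := m_good (t := fun i x w => spdist (fun E => X (i, E) w) (s i) x)
     u v (lam^-1) lpos mt measurableT mb.
  by rewrite setTI.
apply: (@le_trans _ _ (P (\bigcup_(S in [set: {set 'I_l}]) Fs S))); last first.
  apply: le_measure; rewrite ?inE.
  - apply: fin_bigcup_measurable; [exact: finite_finset | move=> S _; exact: mFs].
  - exact: mG.
  - move=> w [S _]; rewrite /Fs; case: ifP => hS hw; last by [].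
    exact: inG hS hw.
rewrite (sum_union P mFs trivF).
have PFs S : P (Fs S) = (if small S then \prod_k fS R Euv S k else 0)%:E.
  rewrite /Fs; case: ifP => _; [exact: (P_Ev lam0 hdist indep) | exact: measure0].
under eq_bigr do rewrite PFs.
rewrite sumEFin lee_fin.
have hN : P [set w | forall k, [set` `[0%R, +oo[%R] (X k w)] = 1%E.
  transitivity (\prod_k P (X k @^-1` `[0%R, +oo[))%E.
    exact: (@indep (fun _ => [set` `[0%R, +oo[%R]) (fun k => measurable_itv `[0%R, +oo[%R)).
  apply: big1 => k _; exact: (P_nonneg hdist k).
have hU : \bigcup_(S in [set: {set 'I_l}]) Ev X lam Euv S =
          [set w | forall k, [set` `[0%R, +oo[%R] (X k w)].
  apply/seteqP; split => w.
  - move=> [S _ hw] k /=; rewrite in_itv /= andbT; exact: (Ev_ge0 lam0 k hw).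
  - move=> /= hw; exists [set i | xth lam < X (i, Euv) w]%SET => //.
    rewrite /Ev => -[i E]; rewrite /Bset /=.
    case: ifP => hE; last exact: (hw (i, E)).
    have := hw (i, E); rewrite /= in_itv /= andbT => h0.
    move/eqP: hE => hE; subst E.
    rewrite inE; case: ltP => hx; rewrite /= in_itv /= ?andbT.
    + exact: hx.
    + by rewrite h0 hx.
have htot : \sum_(S : {set 'I_l}) \prod_k fS R Euv S k = 1.
  have := sum_union P mEv triv; rewrite hU hN.
  under eq_bigr do rewrite (P_Ev lam0 hdist indep).
  rewrite sumEFin => /(congr1 fine) /= h.
  by rewrite -h.
case/andP: (p0_bound R) => hp1 hp2.
have hbig : \sum_(S : {set 'I_l}) (if small S then 0 else \prod_k fS R Euv S k)
    <= (999%:R / 1000%:R) ^+ l.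
  apply: (@le_trans _ _ (\sum_(S : {set 'I_l}) (999%:R / 2000%:R : R) ^+ l)).
    apply: ler_sum => S _; case: ifP => hS.
      apply: exprn_ge0; lra.
    rewrite prod_fS.
    have hC : (#|S| + #|[pred i | i \notin S]|)%N = l.
      by rewrite -[X in _ = X]card_ord -(cardC S); congr (_ + _)%N; apply: eq_card.
    rewrite -[in X in _ <= _ ^+ X]hC; apply: chern => //.
    move/negbT: hS; rewrite /small -leqNgt => hS; lia.
  have hcard : #|{set 'I_l}| = (2 ^ l)%N.
    have := card_powerset [set: 'I_l]%SET; rewrite cardsT card_ord => <-.
    by apply: eq_card => S; rewrite powersetE finset.subsetT.
  rewrite sumr_const hcard.
  have -> : ((999%:R / 2000%:R : R) ^+ l) *+ (2 ^ l) = (999%:R / 1000%:R) ^+ l.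
    rewrite -mulr_natr natrX -exprMn; congr (_ ^+ _); lra.
  exact: lexx.
have hsplit : \sum_(S : {set 'I_l}) \prod_k fS R Euv S k =
   \sum_(S : {set 'I_l}) (if small S then \prod_k fS R Euv S k else 0) +
   \sum_(S : {set 'I_l}) (if small S then 0 else \prod_k fS R Euv S k).
  rewrite -big_split /=; apply: eq_bigr => S _; case: ifP => _.
  - by rewrite addr0.
  - by rewrite add0r.
lra.
Qed.
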